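(* Let $\mathcal{G}=(\mathcal{V},\mathcal{E},w)$ be a simple connected weighted graph with at least two vertices, $s\in\mathcal{V}$, $\beta\in(0,1)$. Let $\dot{\mathcal{V}}\subsetneq\mathcal{V}$ be a subset with $s\in\dot{\mathcal{V}}$ that contains every neighbour of $s$ and induces a connected subgraph. Let $T^\infty=\beta D^\infty+D^{-1}L$ where $D^\infty$ is diagonal with $D^\infty_{vv}=d(v)$ for $v\in\dot{\mathcal{V}}$ and $D^\infty_{vv}=0$ otherwise, and let $x$ solve $T^\infty x=\beta r$ with $r$ the indicator vector of $s$. Then every vertex at which $x$ attains its maximum equals $s$, and $x(s)<1/d(s)$.
   Context: $d(v)=\sum_{u\sim v}w(u,v)$ is the weighted degree, $D=\operatorname{diag}(d(v))$, $A$ the weighted adjacency matrix, $L=D-A$. $r(s)=1$, $r(v)=0$ for $v\ne s$. *)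

(* Defs.v *)
From HB Require Import structures.
From mathcomp Require Import all_boot all_order all_algebra.
Set Implicit Arguments. Unset Strict Implicit. Unset Printing Implicit Defensive.
Import Order.TTheory GRing.Theory Num.Theory.
Local Open Scope ring_scope.

(* A weighted graph on a finite vertex type V is given by w : V -> V -> R;
   u ~ v iff 0 < w u v. *)
Definition simple_weighted_graph (R : realFieldType) (V : finType)
  (w : V -> V -> R) : Prop :=
  (forall u v, w u v = w v u) /\ (forall u v, 0 <= w u v) /\ (forall v, w v v = 0).

Definition adj (R : realFieldType) (V : finType) (w : V -> V -> R) : rel V :=
  fun u v => 0 < w u v.

Definition graph_connected (R : realFieldType) (V : finType) (w : V -> V -> R) : Prop :=
  forall u v, connect (adj w) u v.

Definition induced_connected (R : realFieldType) (V : finType) (w : V -> V -> R)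
  (S : {set V}) : Prop :=
  forall u v, u \in S -> v \in S ->
    connect (fun a b => [&& a \in S, b \in S & adj w a b]) u v.

Definition deg (R : realFieldType) (V : finType) (w : V -> V -> R) (v : V) : R :=
  \sum_(u : V) w v u.

Definition lap (R : realFieldType) (V : finType) (w : V -> V -> R) (u v : V) : R :=
  (if u == v then deg w u else 0) - w u v.

Definition Dinf (R : realFieldType) (V : finType) (w : V -> V -> R) (S : {set V})
  (u v : V) : R :=
  if (u == v) && (u \in S) then deg w u else 0.

Definition Tinf (R : realFieldType) (V : finType) (w : V -> V -> R) (S : {set V})
  (beta : R) (u v : V) : R :=
  beta * Dinf w S u v + (deg w u)^-1 * lap w u v.

Definition indic (R : realFieldType) (V : finType) (s : V) (v : V) : R :=
  if v == s then 1 else 0.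

(* Main.v *)
Require Import Defs.
From HB Require Import structures.
From mathcomp Require Import all_boot all_order all_algebra.
From mathcomp Require Import ring lra.
Import Order.TTheory GRing.Theory Num.Theory.
Local Open Scope ring_scope.

Lemma closed_all (V : finType) (e : rel V) (P : V -> Prop) a b :
  connect e a b -> P a -> (forall u v, P u -> e u v -> P v) -> P b.
Proof.
move=> /connectP[p]; elim: p a => [|y p IH] a /=; first by move=> _ -> .
move=> /andP[eay hp] hb Pa cl; apply: (IH y) => //; exact: cl Pa eay.
Qed.

Lemma exmax (V : finType) (R : realDomainType) (f : V -> R) (a : V) :
  exists u, forall v, f v <= f u.
Proof.
case: (@arg_maxP _ R V a xpredT f isT) => u _ hu; exists u => v; exact: hu.
Qed.

Lemma exmin (V : finType) (R : realDomainType) (f : V -> R) (a : V) :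
  exists u, forall v, f u <= f v.
Proof.
case: (@arg_minP _ R V a xpredT f isT) => u _ hu; exists u => v; exact: hu.
Qed.

Lemma Tinf_expand (R : realFieldType) (V : finType) (w : V -> V -> R)
  (S : {set V}) (beta : R) (x : V -> R) u :
  deg w u != 0 ->
  \sum_(v : V) Tinf w S beta u v * x v =
  beta * (if u \in S then deg w u * x u else 0) +
  (deg w u)^-1 * \sum_v w u v * (x u - x v).
Proof.
move=> d0.
rewrite /Tinf.
under eq_bigr => v _ do rewrite mulrDl -!mulrA.
rewrite big_split /= -!mulr_sumr; congr (_ * _ + _ * _).
  rewrite (bigD1 u) //= big1 ?addr0; last first.
    by move=> v hv; rewrite /Dinf eq_sym (negbTE hv) /= mul0r.
  by rewrite /Dinf eqxx /=; case: (u \in S) => //; rewrite mul0r.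
rewrite /lap.
rewrite (eq_bigr (fun i => (if u==i then deg w u else 0) * x i - w u i * x i)); last by move=> i _; rewrite mulrBl.
rewrite sumrB (bigD1 u) //= big1 ?addr0; last first.
  by move=> v hv; rewrite eq_sym (negbTE hv) mul0r.
rewrite [in RHS](eq_bigr (fun i => w u i * x u - w u i * x i)); last by move=> i _; rewrite mulrBr.
rewrite sumrB eqxx -mulr_suml /deg; done.
Qed.

Lemma sum_zero_terms (R : realFieldType) (V : finType) (F : V -> R) :
  (forall v, 0 <= F v) -> \sum_v F v = 0 -> forall v, F v = 0.
Proof. by move=> h hs v; apply: (psumr_eq0P (P := xpredT)). Qed.

Theorem mainTheorem9 (R : realFieldType) (V : finType) (w : V -> V -> R)
  (s : V) (beta : R) (Vd : {set V}) (x : V -> R) :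
  simple_weighted_graph w ->
  graph_connected w ->
  (1 < #|V|)%N ->
  0 < beta < 1 ->
  s \in Vd ->
  Vd \proper [set: V] ->
  (forall v, adj w s v -> v \in Vd) ->
  induced_connected w Vd ->
  (forall u, \sum_(v : V) Tinf w Vd beta u v * x v = beta * indic R s u) ->
  (forall v, (forall u, x u <= x v) -> v = s) /\ x s < (deg w s)^-1.
Proof.
move=> [wsym [wge0 w0]] conn card2 /andP[b0 b1] sS _ nbS _ hT.
have nbr : forall u, exists y, adj w u y.
  move=> u.
  have [b bu] : exists b, b != u.
    case/card_gt1P: card2 => p [q [_ _ pq]].
    case: (eqVneq p u) => [pu|pu]; last by exists p.
    by exists q; rewrite -pu eq_sym.
  have := conn u b; case/connectP => [[|y p]] /=; first by move=> _ bu'; rewrite bu' eqxx in bu.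
  by case/andP => h _ _; exists y.
have dpos : forall u, 0 < deg w u.
  move=> u; have [y hy] := nbr u.
  rewrite /deg (bigD1 y) //=; apply: (lt_le_trans hy); rewrite lerDl.
  by apply: sumr_ge0 => i _.
pose Q u := \sum_v w u v * (x u - x v).
have E : forall u, beta * (if u \in Vd then deg w u * x u else 0) +
    (deg w u)^-1 * Q u = beta * indic R s u.
  by move=> u; rewrite -Tinf_expand ?hT // gt_eqF.
have adjsym : forall u v, adj w u v -> adj w v u by move=> u v; rewrite /adj wsym.
(* harmonic propagation at a max/min vertex outside Vd *)
have Qmax_ge0 : forall u, (forall v, x v <= x u) -> 0 <= Q u.
  move=> u hu; apply: sumr_ge0 => v _; apply: mulr_ge0 => //; by rewrite subr_ge0.
have Qmin_le0 : forall u, (forall v, x u <= x v) -> Q u <= 0.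
  move=> u hu; rewrite /Q -oppr_ge0 -sumrN; apply: sumr_ge0 => v _.
  by rewrite -mulrN opprB; apply: mulr_ge0 => //; rewrite subr_ge0.
have Qzero : forall u, Q u = 0 -> ((forall v, x v <= x u) \/ (forall v, x u <= x v)) ->
    forall v, adj w u v -> x v = x u.
  move=> u Q0 [hu|hu] v huv.
    have H : forall v, 0 <= x u - x v by move=> z; rewrite subr_ge0.
    have := @sum_zero_terms R V (fun v => w u v * (x u - x v)) (fun v => mulr_ge0 (wge0 u v) (H v)) Q0 v.
    move=> /eqP; rewrite mulf_eq0 (gt_eqF huv) /= subr_eq0 => /eqP; done.
  have Q0' : \sum_v w u v * (x v - x u) = 0.
    by rewrite -[LHS]opprK -sumrN; under eq_bigr => i _ do rewrite -mulrN opprB; rewrite -/(Q u) Q0 oppr0.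
  have H : forall v, 0 <= x v - x u by move=> z; rewrite subr_ge0.
  have := @sum_zero_terms R V (fun v => w u v * (x v - x u)) (fun v => mulr_ge0 (wge0 u v) (H v)) Q0' v.
  move=> /eqP.
  by rewrite mulf_eq0 (gt_eqF huv) /= subr_eq0 => /eqP.
have outside : forall u, u \notin Vd -> Q u = 0.
  move=> u uS; have := E u; rewrite (negbTE uS) mulr0 add0r /indic.
  have -> : (u == s) = false by apply/negbTE; apply: contraNneq uS => ->.
  rewrite mulr0 => /eqP; rewrite mulf_eq0 invr_eq0 (gt_eqF (dpos u)) /= => /eqP; done.
have xge0 : forall z, 0 <= x z.
  have [a ha] := @exmin V R x s.
  suff : 0 <= x a by move=> h z; exact: le_trans h (ha z).
  case: (boolP [exists u, (u \in Vd) && (x u == x a)]).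
    case/existsP => u /andP[uS /eqP xu].
    have hu : forall v, x u <= x v by move=> v; rewrite xu.
    have Ql := Qmin_le0 u hu.
    have Qd : (deg w u)^-1 * Q u <= 0 by rewrite pmulr_rle0 ?invr_gt0.
    have := E u; rewrite uS /indic -xu.
    case: (eqVneq u s) => [eus|us] h.
      subst u.
      rewrite mulr1 in h. have : beta <= beta * (deg w s * x s) by lra.
      move=> h2; have : 0 < beta * (deg w s * x s) by lra.
      by rewrite pmulr_rgt0 // pmulr_rgt0 // => /ltW.
    rewrite mulr0 in h.
    have : 0 <= beta * (deg w u * x u) by lra.
    by rewrite pmulr_rge0 // pmulr_rge0.
  rewrite negb_exists => /forallP hn.
  have : x s = x a.
    apply: (@closed_all _ (adj w) (fun z => x z = x a) a s (conn a s) erefl).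
    move=> u v xu huv.
    have uS : u \notin Vd by move: (hn u); rewrite xu eqxx andbT.
    rewrite (Qzero u (outside u uS)) //; right; by move=> z; rewrite xu.
  by move=> xs; move: (hn s); rewrite sS xs eqxx.
have part1 : forall v, (forall u, x u <= x v) -> v = s.
  move=> v hv; apply/eqP; apply/negPn/negP => vs.
  case: (boolP [exists u, [&& u \in Vd, u != s & x u == x v]]).
    case/existsP => u /and3P[uS us /eqP xu].
    have hu : forall z, x z <= x u by move=> z; rewrite xu.
    have Qg := Qmax_ge0 u hu.
    have Qd : 0 <= (deg w u)^-1 * Q u by rewrite mulr_ge0 // ltW ?invr_gt0.
    have := E u; rewrite uS /indic (negbTE us) mulr0 => h.
    have : beta * (deg w u * x u) <= 0 by lra.
    rewrite pmulr_rle0 // pmulr_rle0 // => xu0.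
    have z0 : forall z, x z = 0.
      by move=> z; apply/eqP; rewrite eq_le xge0 andbT (le_trans (hu z)).
    have := E s; rewrite sS /indic eqxx /Q z0 mulr0 mulr0 add0r.
    under eq_bigr => i _ do rewrite !z0 subrr mulr0.
    by rewrite big1 // mulr0 mulr1 => /esym/eqP; rewrite (gt_eqF b0).
  rewrite negb_exists => /forallP hn.
  have : x s = x v /\ s != s.
    apply: (@closed_all _ (adj w) (fun z => x z = x v /\ z != s) v s (conn v s) (conj erefl vs)).
    move=> u z [xu us] huz.
    have uS : u \notin Vd by move: (hn u); rewrite xu eqxx us andbT andbT.
    split.
      rewrite (Qzero u (outside u uS)) //; left; by move=> y; rewrite xu.
    apply/eqP => zs; subst z; move/negP: uS; apply; exact: nbS (adjsym _ _ huz).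
  by case=> _; rewrite eqxx.
split => //.
have smax : forall u, x u <= x s.
  have [m hm] := @exmax V R x s; by rewrite -(part1 m hm).
have [y hy] := nbr s.
have ys : y != s by apply: contraTneq hy => ->; rewrite /adj w0 ltxx.
have xy : x y < x s.
  rewrite lt_neqAle smax andbT; apply: contra ys => /eqP e.
  apply/eqP; apply: part1 => u; rewrite e; exact: smax.
have Qpos : 0 < Q s.
  rewrite /Q (bigD1 y) //=; apply: ltr_pwDl.
    by apply: mulr_gt0 => //; rewrite subr_gt0.
  by apply: sumr_ge0 => i _; apply: mulr_ge0 => //; rewrite subr_ge0.
have := E s; rewrite sS /indic eqxx mulr1 => h.
have Qd : 0 < (deg w s)^-1 * Q s by rewrite mulr_gt0 // invr_gt0.
have : beta * (deg w s * x s) < beta * 1 by lra.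
rewrite ltr_pM2l // => h2.
have ds := dpos s.
rewrite -[x s](mulKf (lt0r_neq0 ds)) -[X in _ < X]mulr1.
by rewrite ltr_pM2l // invr_gt0.
Qed.
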